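(* Let $k\ge 2$, let $H_0$ be a finite $k$-uniform hypergraph and let $(H_t)_{t\ge0}$ be the ILTH hypergraphs generated from $H_0$. The number of paths of length two in $H_t$ is $\Theta\left((k^2+1)^t\right)$.
   Context: A $k$-uniform hypergraph has every hyperedge a $k$-element subset of the vertex set. The ILTH process: given $H_t$, form $H_{t+1}$ by adding for each vertex $x\in V(H_t)$ a new vertex $x'$ (its clone), and taking $E(H_{t+1})=E(H_t)\cup\{(e\setminus\{x\})\cup\{x'\} : e\in E(H_t),\ x\in e\}$. A path of length two in a hypergraph is a 5-tuple $(u,e_1,v,e_2,w)$ with $u,v,w$ distinct vertices, $e_1,e_2$ distinct hyperedges, $u,v\in e_1$ and $v,w\in e_2$. Asymptotics are as $t\to\infty$ with $k$ and $H_0$ fixed. *)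

(* Defs.v *)
From HB Require Import structures.
From mathcomp Require Import all_boot all_order all_algebra.
From mathcomp Require Import finmap.
Set Implicit Arguments. Unset Strict Implicit. Unset Printing Implicit Defensive.
Import Order.TTheory GRing.Theory Num.Theory.
Local Open Scope fset_scope.

Record hypergraph := Hypergraph { hv : {fset nat}; he : {fset {fset nat}} }.

Definition uniform (k : nat) (H : hypergraph) : Prop :=
  forall e, e \in he H -> (e `<=` hv H) /\ #|` e| = k.

(* Clones are fresh vertices: the clone of x is x + (1 + max vertex). *)
Definition shift (H : hypergraph) : nat := (\max_(x <- hv H) x).+1.
Definition clone (H : hypergraph) (x : nat) : nat := x + shift H.

Definition ilth_step (H : hypergraph) : hypergraph :=
  Hypergraph (hv H `|` [fset clone H x | x in hv H])
             (he H `|` [fset (e `\ x) `|` [fset clone H x] | e in he H, x in e]).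

Definition ilth (H0 : hypergraph) (t : nat) : hypergraph := iter t ilth_step H0.

Definition paths2 (H : hypergraph) : nat :=
  \sum_(e1 <- he H) \sum_(e2 <- he H)
   \sum_(u <- hv H) \sum_(v <- hv H) \sum_(w <- hv H)
     [&& u != v, v != w, u != w, e1 != e2,
         u \in e1, v \in e1, v \in e2 & w \in e2].

(* Main.v *)
Require Import Defs.
From HB Require Import structures.
From mathcomp Require Import all_boot all_order all_algebra.
From mathcomp Require Import finmap.
From mathcomp Require Import zify.
Import Order.TTheory GRing.Theory Num.Theory.

Section Helpers.
Local Open Scope fset_scope.
Local Open Scope nat_scope.
Set Implicit Arguments. Unset Strict Implicit.

Definition deg (H : hypergraph) (v : nat) : nat := \sum_(e <- he H) (v \in e).
Definition SS H := \sum_(v <- hv H) deg H v ^ 2.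
Definition QQ H := \sum_(v <- hv H) deg H v * (deg H v).-1.

Lemma lt_shift H x : x \in hv H -> x < shift H.
Proof. by move=> xH; rewrite /shift ltnS (@leq_bigmax_seq _ _ xpredT (fun y => y)). Qed.

Lemma clone_neq H x y : y \in hv H -> clone H x != y.
Proof.
move=> yH; rewrite neq_ltn; apply/orP; right; rewrite /clone.
have := lt_shift yH; lia.
Qed.

Lemma clone_notinH H x : clone H x \notin hv H.
Proof. by apply/negP => h; have := clone_neq x h; rewrite eqxx. Qed.

Lemma clone_inj H : injective (clone H).
Proof. by move=> x y; rewrite /clone => /addIn. Qed.

Lemma clone_notin_edge k H e x : uniform k H -> e \in he H -> clone H x \notin e.
Proof.
move=> uH eH; apply: contra (clone_notinH H x).
exact: (fsubsetP (uH e eH).1).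
Qed.

Lemma sum_fsetU_disj (T : choiceType) (A B : {fset T}) (F : T -> nat) :
  (forall x, x \in A -> x \notin B) ->
  \sum_(i <- A `|` B) F i = \sum_(i <- A) F i + \sum_(i <- B) F i.
Proof.
move=> dAB; rewrite (big_fsetID _ (mem A)); congr (_ + _); apply: eq_fbigl => x;
  rewrite !inE /=.
  by case: (x \in A); rewrite ?andbF.
case xA: (x \in A) => /=; last by rewrite andbT.
by rewrite (negbTE (dAB _ xA)).
Qed.

Lemma sum_in k H e : uniform k H -> e \in he H -> \sum_(u <- hv H) (u \in e) = k.
Proof.
move=> uH eH; rewrite -(uH e eH).2 card_fset_sum1.
transitivity (\sum_(x <- e) (x \in e)).
  by apply/esym/big_fset_incl; [exact: (uH e eH).1 | move=> x _ /negbTE ->].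
by apply: eq_big_seq => x ->.
Qed.

Definition NN H := [fset (e `\ x) `|` [fset clone H x] | e in he H, x in e].

Lemma sum_N k H (F : {fset nat} -> nat) : uniform k H ->
  \sum_(e' <- NN H) F e' = \sum_(e <- he H) \sum_(x <- e) F ((e `\ x) `|` [fset clone H x]).
Proof.
move=> uH; rewrite big_imfset2 //=.
move=> [e1 x1] [e2 x2]; rewrite !inE /= => /andP[e1H x1e1] /andP[e2H x2e2] /= Heq.
have cx : clone H x1 = clone H x2.
  have := congr1 (fun s => clone H x1 \in s) Heq; rewrite !inE eqxx orbT /=.
  by rewrite (negbTE (clone_notin_edge _ uH e2H)) andbF /= => /esym/eqP.
have x12 := clone_inj cx; subst x2.
suff -> : e1 = e2 by [].
apply/fsetP => y; case: (eqVneq y x1) => [->|ny]; first by rewrite x1e1 x2e2.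
have := congr1 (fun s => y \in s) Heq; rewrite !inE ny /=.
case: (eqVneq y (clone H x1)) => [->|nyc].
  by rewrite !(negbTE (clone_notin_edge _ uH _)).
by rewrite !orbF.
Qed.

Lemma disjN k H : uniform k H -> forall e, e \in he H -> e \notin NN H.
Proof.
move=> uH e' e'H; apply/negP => /imfset2P [e eH [x xe Heq]].
have : clone H x \in hv H.
  apply: (fsubsetP (uH e' e'H).1); rewrite Heq !inE eqxx orbT //.
by rewrite (negbTE (clone_notinH H x)).
Qed.

Lemma uniform_step k H : uniform k H -> uniform k (ilth_step H).
Proof.
move=> uH e'; rewrite /= inE => /orP [e'H | /imfset2P [e eH [x xe ->]]].
  have [s c] := uH _ e'H; split => //; apply: fsubset_trans s (fsubsetUl _ _).
have [s c] := uH _ eH.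
split.
  apply/fsubsetP => y; rewrite !inE => /orP[/andP[_ ye] | /eqP ->].
    by rewrite (fsubsetP s _ ye).
  by apply/orP; right; apply: in_imfset; apply: (fsubsetP s).
rewrite fsetUC cardfsU1 -c (cardfsD1 x e) xe.
have -> : clone H x \notin e `\ x.
  by rewrite !inE negb_and (clone_notin_edge _ uH eH) orbT.
by [].
Qed.

Lemma deg_step_old k H v : uniform k H -> v \in hv H ->
  deg (ilth_step H) v = k * deg H v.
Proof.
move=> uH vH; rewrite /deg /= sum_fsetU_disj; last exact: disjN uH.
rewrite (sum_N _ uH) -big_split big_distrr /=.
apply: eq_big_seq => e eH.
have cv : forall x, v \in (e `\ x) `|` [fset clone H x] = (v != x) && (v \in e).
  move=> x; rewrite !inE.
  by rewrite [v == clone H x]eq_sym (negbTE (clone_neq x vH)) orbF.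
under eq_bigr do rewrite cv.
case ve: (v \in e); last by rewrite big1_fset ?muln0 // => x _; rewrite andbF.
rewrite (big_fsetD1 v ve) eqxx /= add0n.
rewrite (eq_big_seq (fun _ => 1)); last first.
  by move=> x; rewrite !inE => /andP[xv _]; rewrite eq_sym xv.
by rewrite -card_fset_sum1 -(uH e eH).2 (cardfsD1 v e) ve muln1.
Qed.

Lemma deg_step_clone k H v : uniform k H -> v \in hv H ->
  deg (ilth_step H) (clone H v) = deg H v.
Proof.
move=> uH vH; rewrite /deg /= sum_fsetU_disj; last exact: disjN uH.
rewrite (sum_N _ uH) big1_fset ?add0n; last first.
  by move=> e eH _; rewrite (negbTE (clone_notin_edge _ uH eH)).
apply: eq_big_seq => e eH.
have cv : forall x, clone H v \in (e `\ x) `|` [fset clone H x] = (v == x).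
  move=> x; rewrite !inE (negbTE (clone_notin_edge _ uH eH)) andbF /=.
  by rewrite (inj_eq (@clone_inj H)).
under eq_bigr do rewrite cv.
case ve: (v \in e); last first.
  rewrite big1_fset // => x xe _; apply/eqP; rewrite eqb0.
  by apply: contraFN ve => /eqP ->.
rewrite (big_fsetD1 v ve) eqxx /= big1_fset // => x; rewrite !inE.
by move=> /andP[xv _] _; rewrite eq_sym (negbTE xv).
Qed.

Lemma sum_hv_step H (F : nat -> nat) :
  \sum_(v <- hv (ilth_step H)) F v =
  \sum_(v <- hv H) F v + \sum_(v <- hv H) F (clone H v).
Proof.
rewrite /= sum_fsetU_disj; last first.
  by move=> x xH; apply/negP => /imfsetP [y _ eq]; have := clone_neq y xH; rewrite -eq eqxx.
rewrite big_imfset //= => x y _ _; exact: clone_inj.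
Qed.

Lemma sumdeg_step k H (G : nat -> nat) : uniform k H ->
  \sum_(v <- hv (ilth_step H)) G (deg (ilth_step H) v) =
  \sum_(v <- hv H) (G (k * deg H v) + G (deg H v)).
Proof.
move=> uH; rewrite sum_hv_step big_split /=; congr (_ + _); apply: eq_big_seq => v vH.
  by rewrite (deg_step_old uH vH).
by rewrite (deg_step_clone uH vH).
Qed.

Lemma SS_step k H : uniform k H -> SS (ilth_step H) = (k ^ 2 + 1) * SS H.
Proof.
move=> uH; rewrite /SS (sumdeg_step (fun d => d ^ 2) uH) big_distrr /=.
by apply: eq_bigr => v _; rewrite expnMn mulnDl mul1n.
Qed.

Lemma QQ_step k H : uniform k H -> (k ^ 2 + 1) * QQ H <= QQ (ilth_step H).
Proof.
move=> uH; rewrite /QQ (sumdeg_step (fun d => d * d.-1) uH) big_distrr /=.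
apply: leq_sum => v _; set d := deg H v.
case: d => [|d]; first by rewrite !muln0.
rewrite !mulSn /=; nia.
Qed.

Lemma lsum (T : eqType) (r : seq T) (F G : T -> nat) :
  (forall i, i \in r -> F i <= G i) -> \sum_(i <- r) F i <= \sum_(i <- r) G i.
Proof.
move=> h; rewrite big_seq_cond [X in _ <= X]big_seq_cond.
by apply: leq_sum => i /andP[ir _]; exact: h.
Qed.

Lemma B_le (a b c d e f g h : bool) :
  [&& a, b, c, d, e, f, g & h] <= (f * g) * (e * h).
Proof. by case: a; case: b; case: c; case: d; case: e; case: f; case: g; case: h. Qed.

Lemma paths_upper k H : uniform k H -> paths2 H <= k ^ 2 * SS H.
Proof.
move=> uH; rewrite /paths2.
apply: (@leq_trans (\sum_(e1 <- he H) \sum_(e2 <- he H) \sum_(v <- hv H)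
          ((v \in e1) * (v \in e2)) * (k * k))).
  apply: lsum => e1 e1H; apply: lsum => e2 e2H.
  rewrite exchange_big /=; apply: leq_sum => v _.
  apply: (@leq_trans (\sum_(u <- hv H) \sum_(w <- hv H)
            ((v \in e1) * (v \in e2)) * ((u \in e1) * (w \in e2)))).
    by apply: leq_sum => u _; apply: leq_sum => w _; exact: B_le.
  rewrite -{1}(sum_in uH e1H) -(sum_in uH e2H) big_distrl big_distrr /=.
  apply: leq_sum => u _; rewrite mulnA big_distrr /=.
  by apply: leq_sum => w _; rewrite mulnA.
rewrite (eq_bigr (fun e1 => \sum_(v <- hv H) \sum_(e2 <- he H)
          ((v \in e1) * (v \in e2)) * (k * k))); last by move=> e1 _; rewrite exchange_big.
rewrite exchange_big /SS big_distrr /=; apply: leq_sum => v _.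
rewrite -[deg H v ^ 2]mulnn /deg big_distrl big_distrr /=; apply: leq_sum => e1 _.
rewrite big_distrr big_distrr /=; apply: leq_sum => e2 _.
rewrite -mulnn; nia.
Qed.

Lemma exist_uw k H e1 e2 v : uniform k H -> 2 <= k -> e1 \in he H -> e2 \in he H ->
  e1 != e2 -> v \in e2 ->
  exists u w, [/\ u \in e1, u \notin e2, w \in e2 & w != v].
Proof.
move=> uH k2 e1H e2H ne ve2.
have : e1 `\` e2 != fset0.
  rewrite fsetD_eq0; apply/negP => sub.
  have := (fsubset_leqif_cards sub).2.
  rewrite (uH e1 e1H).2 (uH e2 e2H).2 eqxx => /esym/eqP e12.
  by rewrite e12 eqxx in ne.
case/fset0Pn => u; rewrite !inE => /andP[ue2 ue1].
have : e2 `\ v != fset0.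
  rewrite -cardfs_gt0; have := cardfsD1 v e2; rewrite ve2 (uH e2 e2H).2; lia.
case/fset0Pn => w; rewrite !inE => /andP[wv we2].
by exists u, w; split.
Qed.

Lemma paths_lower k H : uniform k H -> 2 <= k -> QQ H <= paths2 H.
Proof.
move=> uH k2.
apply: (@leq_trans (\sum_(e1 <- he H) \sum_(e2 <- he H) \sum_(v <- hv H)
          [&& e1 != e2, v \in e1 & v \in e2])); last first.
  rewrite /paths2; apply: lsum => e1 e1H; apply: lsum => e2 e2H.
  rewrite [X in _ <= X]exchange_big /=; apply: lsum => v vH.
  case: (boolP [&& e1 != e2, v \in e1 & v \in e2]) => [/and3P[ne ve1 ve2] | _ //].
  have [u [w [ue1 ue2 we2 wv]]] := exist_uw uH k2 e1H e2H ne ve2.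
  have uH' : u \in hv H := fsubsetP (uH e1 e1H).1 _ ue1.
  have wH : w \in hv H := fsubsetP (uH e2 e2H).1 _ we2.
  rewrite (big_fsetD1 u uH') (big_fsetD1 w wH) /=.
  apply: leq_trans (leq_addr _ _); apply: leq_trans (leq_addr _ _).
  have uv : u != v by apply: contraNneq ue2 => ->.
  have uw : u != w by apply: contraNneq ue2 => ->.
  by rewrite uv uw eq_sym wv ne ue1 ve1 ve2 we2.
rewrite (eq_bigr (fun e1 => \sum_(v <- hv H) \sum_(e2 <- he H)
          [&& e1 != e2, v \in e1 & v \in e2])); last by move=> e1 _; rewrite exchange_big.
rewrite exchange_big /QQ; apply: leq_sum => v _.
have key : forall e1, e1 \in he H ->
    \sum_(e2 <- he H) [&& e1 != e2, v \in e1 & v \in e2] + (v \in e1) = (v \in e1) * deg H v.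
  move=> e1 e1H; case ve1: (v \in e1); last first.
    by rewrite big1 ?mul0n // => e2 _; rewrite andbF.
  have E1 : \sum_(e2 <- he H) [&& e1 != e2, true & v \in e2] =
            \sum_(e2 <- he H `\ e1) (v \in e2).
    rewrite (big_fsetD1 e1 e1H) eqxx /= add0n; apply: eq_big_seq => e2.
    by rewrite !inE => /andP[ne _]; rewrite eq_sym ne.
  have E2 : deg H v = 1 + \sum_(e2 <- he H `\ e1) (v \in e2).
    by rewrite /deg (big_fsetD1 e1 e1H) ve1.
  rewrite E1 E2; lia.
have : \sum_(e1 <- he H) \sum_(e2 <- he H) [&& e1 != e2, v \in e1 & v \in e2] + deg H v
       = deg H v * deg H v.
  rewrite {1}/deg -big_split /= {2}/deg big_distrl /=.
  by apply: eq_big_seq => e1 e1H; rewrite key.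
case: (deg H v) => [|d] /=; nia.
Qed.

Lemma uniform_ilth k H0 t : uniform k H0 -> uniform k (ilth H0 t).
Proof. by move=> u; elim: t => [|t IH] //=; apply: uniform_step. Qed.

Lemma SS_ilth k H0 t : uniform k H0 -> SS (ilth H0 t) = (k ^ 2 + 1) ^ t * SS H0.
Proof.
move=> u; elim: t => [|t IH]; first by rewrite expn0 mul1n.
rewrite /ilth iterS -/(ilth H0 t) (SS_step (@uniform_ilth k H0 t u)) IH mulnA -expnS //.
Qed.

Lemma QQ_ilth k H0 t : uniform k H0 ->
  (k ^ 2 + 1) ^ t * QQ (ilth H0 1) <= QQ (ilth H0 t.+1).
Proof.
move=> u; elim: t => [|t IH]; first by rewrite expn0 mul1n.
rewrite [ilth H0 t.+2]/ilth iterS -/(ilth H0 t.+1).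
apply: leq_trans (QQ_step (@uniform_ilth k H0 t.+1 u)).
by rewrite expnS -mulnA leq_mul2l IH orbT.
Qed.

Lemma QQ1 k H0 : 2 <= k -> uniform k H0 -> he H0 != fset0 -> 1 <= QQ (ilth H0 1).
Proof.
move=> k2 uH /fset0Pn [e eH].
have : e != fset0 by rewrite -cardfs_gt0 (uH e eH).2; lia.
case/fset0Pn => v ve.
have vH := fsubsetP (uH e eH).1 v ve.
have d1 : 1 <= deg H0 v by rewrite /deg (big_fsetD1 _ eH) ve.
have dst := deg_step_old uH vH.
have vH1 : v \in hv (ilth H0 1) by rewrite /= inE vH.
rewrite /QQ (big_fsetD1 _ vH1) /=; apply: leq_trans (leq_addr _ _).
rewrite /ilth /= in dst *; rewrite dst.
have : 2 <= k * deg H0 v by nia.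
by case: (k * deg H0 v) => [|[|m]].
Qed.

End Helpers.

Local Open Scope ring_scope.

Theorem lemma4p5 (k : nat) (H0 : hypergraph) :
  (2 <= k)%N -> uniform k H0 -> he H0 != fset0 ->
  exists (c1 c2 : rat), 0 < c1 /\ 0 < c2 /\
    exists T : nat, forall t : nat, (T <= t)%N ->
      c1 * ((k ^ 2 + 1) ^ t)%:R <= (paths2 (ilth H0 t))%:R /\
      (paths2 (ilth H0 t))%:R <= c2 * ((k ^ 2 + 1) ^ t)%:R.
Proof.
move=> k2 uH hne.
exists (((k ^ 2 + 1)%N)%:R)^-1, ((k ^ 2 * SS H0).+1)%:R.
split; first by rewrite invr_gt0 ltr0n addn1.
split; first by rewrite ltr0n.
exists 1%N => -[|s] // _; split.
  rewrite (expnS (k ^ 2 + 1) s) natrM mulrA mulVf ?mul1r ?pnatr_eq0 ?addn1 // ler_nat.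
  apply: leq_trans (paths_lower (@uniform_ilth k H0 s.+1 uH) k2).
  apply: leq_trans (QQ_ilth s uH).
  by rewrite -[X in (X <= _)%N]muln1 addn1; apply: leq_mul => //; exact: QQ1 k2 uH hne.
rewrite -natrM ler_nat; apply: leq_trans (paths_upper (@uniform_ilth k H0 s.+1 uH)) _.
rewrite (SS_ilth _ uH) mulnCA [X in (_ <= X)%N]mulnC.
by apply: leq_mul.
Qed.
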